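(* Let $\diamond$ and $\circ$ be associative binary operations on a set $A$ such that $(A,\diamond)$ is a left cancellative semigroup. Consider the statements: (1) There exists a function $\sigma:A\to A$ such that for all $a,b,c\in A$, $\sigma(a)\le a\circ c$ and $a\circ(b\diamond c)=(a\circ b)\diamond\underline{\sigma(a)^\diamond\diamond(a\circ c)}$. (2) There exists a function $\lambda:A\times A\to A$ such that $(A,\diamond,\circ,\lambda)$ is a left semi-truss. (3) For all $a,b,c,d\in A$ with $c\le d$, one has $a\circ c\le a\circ d$ and $a\circ\big(b\diamond\underline{c^\diamond\diamond d}\big)=(a\circ b)\diamond\underline{(a\circ c)^\diamond\diamond(a\circ d)}$. Then (1) implies (2) and (2) implies (3). If moreover $(A,\diamond)$ has an idempotent, then (1), (2), (3) are all equivalent.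
   Context: A left semi-truss $(A,\diamond,\circ,\lambda)$ is a set $A$ with two associative binary operations $\diamond,\circ$ and a function $\lambda:A\times A\to A$ such that $a\circ(b\diamond c)=(a\circ b)\diamond\lambda(a,c)$ for all $a,b,c\in A$. A semigroup $(A,\diamond)$ is left cancellative if $a\diamond b=a\diamond c$ implies $b=c$. On a left cancellative semigroup define the preorder $a\le b$ iff there exists $c\in A$ with $a\diamond c=b$; by left cancellation such $c$ is unique and is denoted $\underline{a^\diamond\diamond b}$ (a single element, characterised by $a\diamond\underline{a^\diamond\diamond b}=b$). *)

(* Defs.v *)
Definition associative {A : Type} (op : A -> A -> A) : Prop :=
  forall a b c, op a (op b c) = op (op a b) c.

Definition left_cancellative {A : Type} (op : A -> A -> A) : Prop :=
  forall a b c, op a b = op a c -> b = c.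

Definition dle {A : Type} (dm : A -> A -> A) (a b : A) : Prop :=
  exists c, dm a c = b.

(* x is the element underline{a^<> <> b}, i.e. a <> x = b
   (unique when dm is left cancellative) *)
Definition is_ldiv {A : Type} (dm : A -> A -> A) (a b x : A) : Prop :=
  dm a x = b.

Definition left_semi_truss {A : Type} (dm cm : A -> A -> A)
    (lam : A -> A -> A) : Prop :=
  associative dm /\ associative cm /\
  forall a b c, cm a (dm b c) = dm (cm a b) (lam a c).

Definition cond1 {A : Type} (dm cm : A -> A -> A) : Prop :=
  exists sigma : A -> A, forall a b c,
    dle dm (sigma a) (cm a c) /\
    exists x, is_ldiv dm (sigma a) (cm a c) x /\
              cm a (dm b c) = dm (cm a b) x.

Definition cond2 {A : Type} (dm cm : A -> A -> A) : Prop :=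
  exists lam : A -> A -> A, left_semi_truss dm cm lam.

Definition cond3 {A : Type} (dm cm : A -> A -> A) : Prop :=
  forall a b c d, dle dm c d ->
    dle dm (cm a c) (cm a d) /\
    forall x y, is_ldiv dm c d x -> is_ldiv dm (cm a c) (cm a d) y ->
      cm a (dm b x) = dm (cm a b) y.

(* Main.v *)
Require Import Defs.
From Stdlib Require Import ClassicalEpsilon.

Lemma one_two (A : Type) (dm cm : A -> A -> A)
    (Hd : associative dm) (Hc : associative cm)
    (Hcan : left_cancellative dm) : cond1 dm cm -> cond2 dm cm.
Proof.
  intros [sigma Hs].
  assert (Hl : forall a c, { x | dm (sigma a) x = cm a c }).
  { intros a c. apply constructive_indefinite_description.
    destruct (Hs a a c) as [H _]. exact H. }
  exists (fun a c => proj1_sig (Hl a c)).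
  split; [exact Hd|]. split; [exact Hc|].
  intros a b c. destruct (Hl a c) as [x Hx]; simpl.
  destruct (Hs a b c) as [_ [y [Hy E]]].
  unfold is_ldiv in Hy. rewrite E. f_equal. apply (Hcan (sigma a)). congruence.
Qed.

Lemma two_three (A : Type) (dm cm : A -> A -> A)
    (Hd : associative dm) (Hc : associative cm)
    (Hcan : left_cancellative dm) : cond2 dm cm -> cond3 dm cm.
Proof.
  intros [lam [_ [_ H]]] a b c d [x Hx]. split.
  - exists (lam a x). rewrite <- H, Hx. reflexivity.
  - intros x' y Hx' Hy. unfold is_ldiv in *. rewrite H. f_equal.
    apply (Hcan (cm a c)). rewrite Hy, <- H, Hx'. reflexivity.
Qed.

Lemma three_one (A : Type) (dm cm : A -> A -> A)
    (Hd : associative dm) (Hc : associative cm)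
    (Hcan : left_cancellative dm) (e : A) (He : dm e e = e) :
  cond3 dm cm -> cond1 dm cm.
Proof.
  intros H3.
  assert (Hec : forall c, dm e c = c).
  { intros c. apply (Hcan e). rewrite Hd, He. reflexivity. }
  exists (fun a => cm a e). intros a b c.
  destruct (H3 a b e c (ex_intro _ c (Hec c))) as [Hle H2].
  split; [exact Hle|].
  destruct Hle as [y Hy]. exists y. split; [exact Hy|].
  apply H2; [apply Hec | exact Hy].
Qed.

Theorem proposition2p2 (A : Type) (dm cm : A -> A -> A)
    (Hd : associative dm) (Hc : associative cm)
    (Hcan : left_cancellative dm) :
  (cond1 dm cm -> cond2 dm cm) /\
  (cond2 dm cm -> cond3 dm cm) /\
  ((exists e : A, dm e e = e) ->
     (cond1 dm cm <-> cond2 dm cm) /\ (cond2 dm cm <-> cond3 dm cm)).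
Proof.
  pose proof (one_two A dm cm Hd Hc Hcan) as H12.
  pose proof (two_three A dm cm Hd Hc Hcan) as H23.
  split; [exact H12|]. split; [exact H23|].
  intros [e He].
  pose proof (three_one A dm cm Hd Hc Hcan e He) as H31.
  split; split; auto.
Qed.
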